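(* For each $\Lambda\in\{\mathsf{CS4},\mathsf{GS4},\mathsf{S4I}\}$ and every formula $\varphi$: $\Lambda\vdash\varphi$ if and only if $\mathcal M\models\varphi$ for every $\Lambda$-model $\mathcal M$.
   Context: Fix a countably infinite set $\mathbb P$ of propositional variables. Formulas: $\varphi,\psi ::= p\mid\bot\mid(\varphi\wedge\psi)\mid(\varphi\vee\psi)\mid(\varphi\to\psi)\mid\Diamond\varphi\mid\Box\varphi$; $\neg\varphi:=\varphi\to\bot$. A bi-intuitionistic frame is $(W,W_\bot,\preccurlyeq,\sqsubseteq)$ with $\preccurlyeq,\sqsubseteq$ preorders on $W$ and $W_\bot\subseteq W$ upward closed under both; infallible if $W_\bot=\varnothing$. A valuation $V:\mathbb P\to 2^W$ has each $V(p)$ upward closed under $\preccurlyeq$ and containing $W_\bot$; a model is $\mathcal M=(W,W_\bot,\preccurlyeq,\sqsubseteq,V)$. Satisfaction: $p$ iff $w\in V(p)$; $\bot$ iff $w\in W_\bot$; $\wedge,\vee$ pointwise; $w\models\varphi\to\psi$ iff for all $v\succcurlyeq w$, $v\models\varphi$ implies $v\models\psi$; $w\models\Diamond\varphi$ iff for all $u\succcurlyeq w$ there is $v\sqsupseteq u$ with $v\models\varphi$; $w\models\Box\varphi$ iff $v\models\varphi$ whenever $w\preccurlyeq u\sqsubseteq v$. $\mathcal M\models\varphi$ iff $\varphi$ holds at every $w\in W\setminus W_\bot$. $\sqsubseteq$ is forward confluent if $w\preccurlyeq w'$, $w\sqsubseteq v$ imply some $v'$ with $v\preccurlyeq v'$,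 $w'\sqsubseteq v'$; backward confluent if $w\sqsubseteq v\preccurlyeq v'$ implies some $w'$ with $w\preccurlyeq w'\sqsubseteq v'$; downward confluent if $w\preccurlyeq v\sqsubseteq v'$ implies some $w'$ with $w\sqsubseteq w'\preccurlyeq v'$. Locally linear: $w\preccurlyeq u$, $w\preccurlyeq v$ imply $u\preccurlyeq v$ or $v\preccurlyeq u$. $\mathsf{CS4}$-frames: backward confluent bi-intuitionistic frames. $\mathsf{GS4}$-frames: infallible, locally linear, forward and backward confluent. $\mathsf{S4I}$-frames: infallible, forward and downward confluent. A $\Lambda$-model is a model on a $\Lambda$-frame. $\mathsf{CS4}$ is the least set of formulas containing all intuitionistic propositional tautologies and all instances of $\Box(\varphi\to\psi)\to(\Box\varphi\to\Box\psi)$, $\Box(\varphi\to\psi)\to(\Diamond\varphi\to\Diamond\psi)$, $\Box\varphi\to\varphi$, $\varphi\to\Diamond\varphi$, $\Box\varphi\to\Box\Box\varphi$, $\Diamond\Diamond\varphi\to\Diamond\varphi$, closed under modus ponens and necessitation. Axioms: (FS) $(\Diamond\varphi\to\Box\psi)\to\Box(\varphi\to\psi)$; (DP) $\Diamond(\varphi\vee\psi)\to\Diamond\varphi\vee\Diamond\psi$; (N) $\neg\Diamond\bot$; (CD) $\Box(\varphi\vee\psi)\to\Box\varphi\vee\Diamond\psi$; (GD) $(\varphi\to\psi)\vee(\psi\to\varphi)$. $\mathsf{GS4}=\mathsf{CS4}+\mathrm{FS}+\mathrm{DP}+\mathrm N+\mathrm{GD}$ and $\mathsf{S4I}=\mathsf{CS4}+\mathrm{DP}+\mathrm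 N+\mathrm{CD}$ (adding all instances, closed under the same rules). *)

(* Defs.v *)
Inductive form : Type :=
| Var : nat -> form
| Bot : form
| And : form -> form -> form
| Or  : form -> form -> form
| Imp : form -> form -> form
| Dia : form -> form
| Box : form -> form.

Definition Neg (p : form) : form := Imp p Bot.

Record frame : Type := {
  W     : Type;
  Wbot  : W -> Prop;
  le    : W -> W -> Prop;
  sq    : W -> W -> Prop;
  le_refl  : forall w, le w w;
  le_trans : forall u v w, le u v -> le v w -> le u w;
  sq_refl  : forall w, sq w w;
  sq_trans : forall u v w, sq u v -> sq v w -> sq u w;
  Wbot_up_le : forall w v, Wbot w -> le w v -> Wbot v;
  Wbot_up_sq : forall w v, Wbot w -> sq w v -> Wbot v
}.

Record model : Type := {
  mframe :> frame;
  val : nat -> W mframe -> Prop;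
  val_up  : forall p w v, val p w -> le mframe w v -> val p v;
  val_bot : forall p w, Wbot mframe w -> val p w
}.

Fixpoint sat (M : model) (w : W M) (f : form) : Prop :=
  match f with
  | Var p => val M p w
  | Bot => Wbot M w
  | And a b => sat M w a /\ sat M w b
  | Or a b => sat M w a \/ sat M w b
  | Imp a b => forall v, le M w v -> sat M v a -> sat M v b
  | Dia a => forall u, le M w u -> exists v, sq M u v /\ sat M v a
  | Box a => forall u v, le M w u -> sq M u v -> sat M v a
  end.

Definition valid (M : model) (f : form) : Prop :=
  forall w : W M, ~ Wbot M w -> sat M w f.

Definition infallible (F : frame) : Prop := forall w, ~ Wbot F w.

Definition forward_confluent (F : frame) : Prop :=
  forall w w' v, le F w w' -> sq F w v -> exists v', le F v v' /\ sq F w' v'.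

Definition backward_confluent (F : frame) : Prop :=
  forall w v v', sq F w v -> le F v v' -> exists w', le F w w' /\ sq F w' v'.

Definition downward_confluent (F : frame) : Prop :=
  forall w v v', le F w v -> sq F v v' -> exists w', sq F w w' /\ le F w' v'.

Definition locally_linear (F : frame) : Prop :=
  forall w u v, le F w u -> le F w v -> le F u v \/ le F v u.

Definition CS4_frame (F : frame) : Prop := backward_confluent F.

Definition GS4_frame (F : frame) : Prop :=
  infallible F /\ locally_linear F /\ forward_confluent F /\ backward_confluent F.

Definition S4I_frame (F : frame) : Prop :=
  infallible F /\ forward_confluent F /\ downward_confluent F.

(* "All intuitionistic propositional tautologies" (substitution instances in
   the modal language) are generated by the standard Hilbert axioms of IPC
   together with modus ponens. [Ax] is the set of extra axiom instances. *)
Inductive prv (Ax : form -> Prop) : form -> Prop :=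
| ax_K  : forall a b, prv Ax (Imp a (Imp b a))
| ax_S  : forall a b c,
    prv Ax (Imp (Imp a (Imp b c)) (Imp (Imp a b) (Imp a c)))
| ax_andI : forall a b, prv Ax (Imp a (Imp b (And a b)))
| ax_andE1 : forall a b, prv Ax (Imp (And a b) a)
| ax_andE2 : forall a b, prv Ax (Imp (And a b) b)
| ax_orI1 : forall a b, prv Ax (Imp a (Or a b))
| ax_orI2 : forall a b, prv Ax (Imp b (Or a b))
| ax_orE : forall a b c,
    prv Ax (Imp (Imp a c) (Imp (Imp b c) (Imp (Or a b) c)))
| ax_efq : forall a, prv Ax (Imp Bot a)
| ax_Kbox : forall a b, prv Ax (Imp (Box (Imp a b)) (Imp (Box a) (Box b)))
| ax_Kdia : forall a b, prv Ax (Imp (Box (Imp a b)) (Imp (Dia a) (Dia b)))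
| ax_Tbox : forall a, prv Ax (Imp (Box a) a)
| ax_Tdia : forall a, prv Ax (Imp a (Dia a))
| ax_4box : forall a, prv Ax (Imp (Box a) (Box (Box a)))
| ax_4dia : forall a, prv Ax (Imp (Dia (Dia a)) (Dia a))
| ax_extra : forall a, Ax a -> prv Ax a
| r_mp  : forall a b, prv Ax (Imp a b) -> prv Ax a -> prv Ax b
| r_nec : forall a, prv Ax a -> prv Ax (Box a).

Definition FS_inst (f : form) : Prop :=
  exists a b, f = Imp (Imp (Dia a) (Box b)) (Box (Imp a b)).
Definition DP_inst (f : form) : Prop :=
  exists a b, f = Imp (Dia (Or a b)) (Or (Dia a) (Dia b)).
Definition N_inst (f : form) : Prop := f = Neg (Dia Bot).
Definition CD_inst (f : form) : Prop :=
  exists a b, f = Imp (Box (Or a b)) (Or (Box a) (Dia b)).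
Definition GD_inst (f : form) : Prop :=
  exists a b, f = Or (Imp a b) (Imp b a).

Inductive logic : Type := CS4 | GS4 | S4I.

Definition extra_axioms (L : logic) : form -> Prop :=
  match L with
  | CS4 => fun _ => False
  | GS4 => fun f => FS_inst f \/ DP_inst f \/ N_inst f \/ GD_inst f
  | S4I => fun f => DP_inst f \/ N_inst f \/ CD_inst f
  end.

Definition proves (L : logic) (f : form) : Prop := prv (extra_axioms L) f.

Definition frame_class (L : logic) : frame -> Prop :=
  match L with
  | CS4 => CS4_frame
  | GS4 => GS4_frame
  | S4I => S4I_frame
  end.

(* Main.v *)
Require Import Defs.
From Stdlib Require Import Classical Arith Lia Cantor.

Definition Top := Imp Bot Bot.
Definition BoxInv (G : form -> Prop) := fun x => G (Box x).

Section PT.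
Variable Ax : form -> Prop.
Notation pv := (prv Ax).

Lemma pv_id a : pv (Imp a a).
Proof.
  eapply r_mp; [eapply r_mp; [apply (ax_S _ a (Imp a a) a) | apply ax_K] | apply (ax_K _ a a)].
Qed.

Inductive ded (X : form -> Prop) : form -> Prop :=
| d_hyp a : X a -> ded X a
| d_thm a : pv a -> ded X a
| d_mp a b : ded X (Imp a b) -> ded X a -> ded X b.

Lemma ded_mono (X Y : form -> Prop) a : (forall x, X x -> Y x) -> ded X a -> ded Y a.
Proof. intros H D; induction D; [apply d_hyp; auto | apply d_thm; auto | eapply d_mp; eauto]. Qed.

Lemma ded_pmp X a b : pv (Imp a b) -> ded X a -> ded X b.
Proof. intros; eapply d_mp; [apply d_thm; eauto | auto]. Qed.

Lemma deduction X a b : ded (fun x => X x \/ x = a) b -> ded X (Imp a b).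
Proof.
  intro D; induction D as [c [Hc|Hc]|c Hc|c d D1 IH1 D2 IH2].
  - eapply ded_pmp; [apply ax_K | apply d_hyp; auto].
  - subst; apply d_thm, pv_id.
  - eapply ded_pmp; [apply ax_K | apply d_thm; auto].
  - eapply d_mp; [eapply ded_pmp; [apply ax_S | exact IH1] | exact IH2].
Qed.

Lemma ded_weak1 X a b : ded X b -> ded (fun x => X x \/ x = a) b.
Proof. apply ded_mono; auto. Qed.

Lemma ded_ass X a : ded (fun x => X x \/ x = a) a.
Proof. apply d_hyp; auto. Qed.

Lemma ded_empty a : ded (fun _ => False) a -> pv a.
Proof. intro D; induction D; [contradiction | auto | eapply r_mp; eauto]. Qed.

Lemma pv_ded X a : pv a -> ded X a.
Proof. apply d_thm. Qed.

Lemma ded_comp X a b c : ded X (Imp a b) -> ded X (Imp b c) -> ded X (Imp a c).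
Proof.
  intros H1 H2; apply deduction.
  eapply d_mp; [apply ded_weak1; eauto |].
  eapply d_mp; [apply ded_weak1; eauto | apply ded_ass].
Qed.

Lemma ded_orE X a b c : ded X (Imp a c) -> ded X (Imp b c) -> ded X (Imp (Or a b) c).
Proof. intros H1 H2; eapply d_mp; [eapply d_mp; [apply d_thm, ax_orE | eauto] | eauto]. Qed.

Lemma ded_orI1 X a b : ded X (Imp a (Or a b)).
Proof. apply d_thm, ax_orI1. Qed.
Lemma ded_orI2 X a b : ded X (Imp b (Or a b)).
Proof. apply d_thm, ax_orI2. Qed.
Lemma ded_idi X a : ded X (Imp a a).
Proof. apply d_thm, pv_id. Qed.
Lemma ded_K X a b : ded X a -> ded X (Imp b a).
Proof. intro; eapply ded_pmp; [apply ax_K | auto]. Qed.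

Lemma ded_and X a b : ded X a -> ded X b -> ded X (And a b).
Proof. intros; eapply d_mp; [eapply ded_pmp; [apply ax_andI | eauto] | eauto]. Qed.

Lemma ded_cut X a b : ded (fun x => X x \/ x = a) b -> ded X a -> ded X b.
Proof. intros H1 H2; eapply d_mp; [apply deduction; eauto | auto]. Qed.

Lemma pv_dia_mono a b : pv (Imp a b) -> pv (Imp (Dia a) (Dia b)).
Proof. intro; eapply r_mp; [apply ax_Kdia | apply r_nec; auto]. Qed.
Lemma pv_box_mono a b : pv (Imp a b) -> pv (Imp (Box a) (Box b)).
Proof. intro; eapply r_mp; [apply ax_Kbox | apply r_nec; auto]. Qed.

Definition theory (G : form -> Prop) := forall a, ded G a -> G a.
Definition prime (G : form -> Prop) := forall a b, G (Or a b) -> G a \/ G b.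

Lemma th_thm G a : theory G -> pv a -> G a.
Proof. intros T H; apply T, d_thm, H. Qed.
Lemma th_mp G a b : theory G -> G (Imp a b) -> G a -> G b.
Proof. intros T H1 H2; apply T; eapply d_mp; apply d_hyp; eauto. Qed.
Lemma th_pmp G a b : theory G -> pv (Imp a b) -> G a -> G b.
Proof. intros T H1 H2; eapply th_mp; [exact T| apply th_thm; [exact T| exact H1] | exact H2]. Qed.
Lemma th_ded G a : theory G -> ded G a -> G a.
Proof. auto. Qed.

Lemma box_ded G a : theory G -> ded (BoxInv G) a -> G (Box a).
Proof.
  intros T D; induction D as [c Hc|c Hc|c d D1 IH1 D2 IH2].
  - exact Hc.
  - apply th_thm; auto; apply r_nec; auto.
  - eapply th_mp; [auto | eapply th_pmp; [auto | apply ax_Kbox | eauto] | eauto].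
Qed.

Fixpoint code (f : form) : nat :=
  match f with
  | Var p => to_nat (0, p)
  | Bot => to_nat (1, 0)
  | And a b => to_nat (2, to_nat (code a, code b))
  | Or a b => to_nat (3, to_nat (code a, code b))
  | Imp a b => to_nat (4, to_nat (code a, code b))
  | Dia a => to_nat (5, code a)
  | Box a => to_nat (6, code a)
  end.

Lemma to_nat_inj p q : to_nat p = to_nat q -> p = q.
Proof. intro H; rewrite <- (cancel_of_to p), <- (cancel_of_to q), H; reflexivity. Qed.

Lemma pair_inj (a b c d : nat) : (a, b) = (c, d) -> a = c /\ b = d.
Proof. intro H; inversion H; auto. Qed.

Lemma code_inj f g : code f = code g -> f = g.
Proof.
  revert g; induction f; destruct g; cbn [code]; intro H; apply to_nat_inj in H;
  apply pair_inj in H; destruct H as [H1 H2]; try discriminate; try reflexivity.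
  all: try (apply to_nat_inj in H2; apply pair_inj in H2; destruct H2 as [H2 H3]).
  all: f_equal; auto.
Qed.

Section Lind.
Variables (X P : form -> Prop).
Hypothesis Por : forall a b, P a -> P b -> P (Or a b).
Hypothesis Pok : forall p, P p -> ~ ded X p.

Fixpoint chain (n : nat) : form -> Prop :=
  match n with
  | 0 => X
  | S n => fun x => chain n x \/
     (code x = n /\ forall p, P p -> ~ ded (fun y => chain n y \/ y = x) p)
  end.
Definition lim x := exists n, chain n x.

Lemma chain_inv n p : P p -> ~ ded (chain n) p.
Proof.
  revert p; induction n; intros p Hp; simpl; [auto|].
  destruct (classic (exists x, code x = n /\ forall p, P p -> ~ ded (fun y => chain n y \/ y = x) p))
    as [[x [Hx1 Hx2]]|Hno].
  - intro D; apply (Hx2 p Hp); revert D; apply ded_mono.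
    intros y [Hy|[Hy1 Hy2]]; auto. right; apply code_inj; congruence.
  - intro D; apply (IHn p Hp); revert D; apply ded_mono.
    intros y [Hy|[Hy1 Hy2]]; auto. exfalso; apply Hno; eauto.
Qed.

Lemma chain_mono n m x : n <= m -> chain n x -> chain m x.
Proof. induction 1; simpl; auto. Qed.

Lemma lim_compact a : ded lim a -> exists n, ded (chain n) a.
Proof.
  intro D; induction D as [c [n Hc]|c Hc|c d D1 [n1 IH1] D2 [n2 IH2]].
  - exists n; apply d_hyp; auto.
  - exists 0; apply d_thm; auto.
  - exists (max n1 n2); eapply d_mp; (eapply ded_mono; [|eauto]); intros;
    (eapply chain_mono; [|eassumption]; lia).
Qed.

Lemma lim_inv p : P p -> ~ ded lim p.
Proof. intros Hp D; destruct (lim_compact _ D) as [n Dn]; exact (chain_inv n p Hp Dn). Qed.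

Lemma lim_stage a : ~ lim a -> exists p, P p /\ ded (fun y => chain (code a) y \/ y = a) p.
Proof.
  intro Hn. apply NNPP; intro H. apply Hn; exists (S (code a)); simpl; right; split; auto.
  intros p Hp D; apply H; eauto.
Qed.

Lemma lim_theory : theory lim.
Proof.
  intros a D. apply NNPP; intro Hn. destruct (lim_stage a Hn) as [p [Hp Dp]].
  apply (lim_inv p Hp). eapply ded_cut; [|exact D].
  revert Dp; apply ded_mono; intros y [Hy|Hy]; auto; left; exists (code a); auto.
Qed.

Lemma lim_prime : prime lim.
Proof.
  intros a b H. apply NNPP; intro Hn. apply not_or_and in Hn as [Ha Hb].
  destruct (lim_stage a Ha) as [p1 [Hp1 D1]]; destruct (lim_stage b Hb) as [p2 [Hp2 D2]].
  apply (lim_inv (Or p1 p2) (Por _ _ Hp1 Hp2)).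
  eapply d_mp; [| apply d_hyp; exact H].
  apply ded_orE.
  - eapply ded_comp; [apply deduction | apply ded_orI1].
    revert D1; apply ded_mono; intros y [Hy|Hy]; [left; exists (code a); auto | right; auto].
  - eapply ded_comp; [apply deduction | apply ded_orI2].
    revert D2; apply ded_mono; intros y [Hy|Hy]; [left; exists (code b); auto | right; auto].
Qed.
End Lind.

Lemma lindenbaum (X P : form -> Prop) : (forall a b, P a -> P b -> P (Or a b)) -> (forall p, P p -> ~ ded X p) ->
  exists G, theory G /\ prime G /\ (forall x, X x -> G x) /\ (forall p, P p -> ~ G p).
Proof.
  intros H1 H2; exists (lim X P); repeat split.
  - apply lim_theory; auto.
  - apply lim_prime; auto.
  - intros x Hx; exists 0; exact Hx.
  - intros p Hp Hg; eapply lim_inv; eauto; apply d_hyp; auto.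
Qed.

Lemma lind1 (X : form -> Prop) b : ~ ded X b ->
  exists G, theory G /\ prime G /\ (forall x, X x -> G x) /\ ~ G b.
Proof.
  intro Hb. destruct (lindenbaum X (fun p => ded X (Imp p b))) as [G [T [Pr [S Av]]]].
  - intros; apply ded_orE; auto.
  - intros p Hp Dp; apply Hb; eapply d_mp; eauto.
  - exists G; repeat split; auto. apply Av, ded_idi.
Qed.

Lemma split_lem (Z Y : form -> Prop) (f : form -> form) :
  Y Top -> (forall a b, Y a -> Y b -> Y (And a b)) ->
  (forall a b, pv (Imp (f (And a b)) (f a))) -> (forall a b, pv (Imp (f (And a b)) (f b))) ->
  forall z, ded (fun u => Z u \/ exists y, Y y /\ u = f y) z -> exists y, Y y /\ ded Z (Imp (f y) z).
Proof.
  intros HT HA H1 H2 z D; induction D as [c [Hc|[y [Hy Hc]]]|c Hc|c d D1 [y1 [Y1 IH1]] D2 [y2 [Y2 IH2]]].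
  - exists Top; split; auto; apply ded_K, d_hyp; auto.
  - subst; exists y; split; auto; apply ded_idi.
  - exists Top; split; auto; apply ded_K, d_thm; auto.
  - exists (And y1 y2); split; auto. apply deduction.
    eapply d_mp; [eapply d_mp; [apply ded_weak1; exact IH1| eapply ded_pmp; [apply H1|apply ded_ass]] | eapply d_mp; [apply ded_weak1; exact IH2| eapply ded_pmp; [apply H2|apply ded_ass]]].
Qed.

Lemma th_top G : theory G -> G Top.
Proof. intro; apply th_thm; auto; apply pv_id. Qed.
Lemma th_and G a b : theory G -> G a -> G b -> G (And a b).
Proof. intros T H1 H2; apply T, ded_and; apply d_hyp; auto. Qed.

End PT.

Section Sound.
Variable M : model.
Notation le' := (le (mframe M)).
Notation sq' := (sq (mframe M)).
Notation lrefl := (le_refl (mframe M)).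
Notation ltrans := (le_trans (mframe M)).

Lemma persist f : forall w v, sat M w f -> le' w v -> sat M v f.
Proof.
  induction f; simpl; intros w v H Hv.
  - eapply val_up; eauto.
  - eapply Wbot_up_le; eauto.
  - destruct H; split; eauto.
  - destruct H; [left|right]; eauto.
  - intros v' Hv'; apply H; eapply ltrans; eauto.
  - intros u Hu; apply H; eapply ltrans; eauto.
  - intros u z Hu Hz; apply (H u z); auto; eapply ltrans; eauto.
Qed.

Lemma bot_sat f : forall w, Wbot M w -> sat M w f.
Proof.
  induction f; simpl; intros w H.
  - apply val_bot; auto.
  - auto.
  - split; auto.
  - left; auto.
  - intros v Hv _; apply IHf2; eapply Wbot_up_le; eauto.
  - intros u Hu; exists u; split; [apply sq_refl | apply IHf; eapply Wbot_up_le; eauto].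
  - intros u v Hu Hv; apply IHf; eapply Wbot_up_sq; [eapply Wbot_up_le; eauto | eauto].
Qed.

Lemma base_sound a : forall w, sat M w a -> forall v, le' w v -> sat M v a.
Proof. intros; eapply persist; eauto. Qed.

Ltac pers := eapply persist; [eassumption | eassumption].

Lemma box4_bwd : backward_confluent (mframe M) -> forall a w, sat M w (Imp (Box a) (Box (Box a))).
Proof.
  intros BC a w; simpl; intros v _ H u z Hu Hz u' z' Hu' Hz'.
  destruct (BC _ _ _ Hz Hu') as [w' [H1 H2]].
  apply (H w' z'); [eapply ltrans; eauto | eapply sq_trans; eauto].
Qed.

Lemma box4_down : downward_confluent (mframe M) -> forall a w, sat M w (Imp (Box a) (Box (Box a))).
Proof.
  intros DC a w; simpl; intros v _ H u z Hu Hz u' z' Hu' Hz'.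
  destruct (DC _ _ _ Hu' Hz') as [x [H1 H2]].
  eapply persist; [|exact H2]. apply (H u x); auto; eapply sq_trans; eauto.
Qed.

Lemma soundness (Ax : form -> Prop) :
  (forall a w, sat M w (Imp (Box a) (Box (Box a)))) ->
  (forall a, Ax a -> forall w, sat M w a) ->
  forall f, prv Ax f -> forall w, sat M w f.
Proof.
  intros B4 HAx f D; induction D; intro w; simpl in *.
  - intros v Hv Ha v' Hv' Hb; pers.
  - intros v1 H1 Habc v2 H2 Hab v3 H3 Ha.
    apply (Habc v3 (ltrans _ _ _ H2 H3) Ha v3 (lrefl _) (Hab v3 H3 Ha)).
  - intros v1 H1 Ha v2 H2 Hb; split; [pers|auto].
  - intros v _ [H1 H2]; auto.
  - intros v _ [H1 H2]; auto.
  - intros v _ H; auto.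
  - intros v _ H; auto.
  - intros v1 _ Hac v2 H2 Hbc v3 H3 [Ha|Hb].
    + apply (Hac v3 (ltrans _ _ _ H2 H3)); auto.
    + apply (Hbc v3 H3); auto.
  - intros v _ H; apply bot_sat; auto.
  - intros v1 _ H1 v2 H2 H3 u z Hu Hz.
    apply (H1 u z (ltrans _ _ _ H2 Hu) Hz z (lrefl _) (H3 u z Hu Hz)).
  - intros v1 _ H1 v2 H2 H3 u Hu. destruct (H3 u Hu) as [z [Hz Hza]].
    exists z; split; auto. apply (H1 u z (ltrans _ _ _ H2 Hu) Hz z (lrefl _) Hza).
  - intros v _ H; apply (H v v (lrefl _) (sq_refl _ _)).
  - intros v _ H u Hu; exists u; split; [apply sq_refl | pers].
  - apply (B4 a w).
  - intros v _ H u Hu; destruct (H u Hu) as [z [Hz Hz2]].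
    destruct (Hz2 z (lrefl _)) as [y [Hy Hya]]; exists y; split; auto; eapply sq_trans; eauto.
  - apply HAx; auto.
  - apply (IHD1 w w (lrefl _) (IHD2 w)).
  - intros u v _ _; auto.
Qed.

Lemma FS_sound a b w : forward_confluent (mframe M) -> backward_confluent (mframe M) ->
  sat M w (Imp (Imp (Dia a) (Box b)) (Box (Imp a b))).
Proof.
  intros FC BC; simpl; intros v _ H u z Hu Hz y Hy Ha.
  destruct (BC _ _ _ Hz Hy) as [u' [H1 H2]].
  assert (Hd : sat M u' (Dia a)).
  { simpl; intros t Ht. destruct (FC _ _ _ Ht H2) as [y' [H3 H4]]. exists y'; split; auto; pers. }
  apply (H u' (ltrans _ _ _ Hu H1) Hd u' y (lrefl _) H2).
Qed.

Lemma DP_sound a b w : forward_confluent (mframe M) ->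
  sat M w (Imp (Dia (Or a b)) (Or (Dia a) (Dia b))).
Proof.
  intros FC; simpl; intros v _ H. destruct (H v (lrefl _)) as [z [Hz [Ha|Hb]]]; [left|right];
  intros u Hu; destruct (FC _ _ _ Hu Hz) as [z' [H1 H2]]; exists z'; split; auto; pers.
Qed.

Lemma N_sound w : infallible (mframe M) -> sat M w (Neg (Dia Bot)).
Proof.
  intros IF; simpl; intros v _ H. destruct (H v (lrefl _)) as [z [_ Hz]]. exfalso; exact (IF z Hz).
Qed.

Lemma GD_sound a b w : locally_linear (mframe M) -> sat M w (Or (Imp a b) (Imp b a)).
Proof.
  intros LL. destruct (classic (sat M w (Imp a b))) as [H|H]; [left; auto|right].
  simpl in *. apply not_all_ex_not in H as [v H].
  apply imply_to_and in H as [Hv H]. apply imply_to_and in H as [Ha Hb].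
  intros v' Hv' Hb'. destruct (LL _ _ _ Hv Hv') as [H1|H1].
  - pers.
  - exfalso; apply Hb; pers.
Qed.

Lemma CD_sound a b w : forward_confluent (mframe M) -> downward_confluent (mframe M) ->
  sat M w (Imp (Box (Or a b)) (Or (Box a) (Dia b))).
Proof.
  intros FC DC; simpl; intros v _ H.
  destruct (classic (exists z, sq' v z /\ sat M z b)) as [[z [Hz Hb]]|Hno].
  - right; intros u Hu; destruct (FC _ _ _ Hu Hz) as [z' [H1 H2]]; exists z'; split; auto; pers.
  - left; intros u x Hu Hx. destruct (DC _ _ _ Hu Hx) as [v' [H1 H2]].
    destruct (H v v' (lrefl _) H1) as [Ha|Hb].
    + pers.
    + exfalso; apply Hno; eauto.
Qed.

End Sound.

Lemma sound_L (L : logic) (M : model) f : frame_class L (mframe M) -> proves L f -> forall w, sat M w f.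
Proof.
  intros FC D. apply (soundness M (extra_axioms L)); auto.
  - destruct L; simpl in FC.
    + apply box4_bwd; auto.
    + apply box4_bwd; destruct FC as (_&_&_&?); auto.
    + apply box4_down; destruct FC as (_&_&?); auto.
  - destruct L; simpl in *; intros a Ha w; unfold N_inst in Ha.
    + contradiction.
    + destruct FC as [I [LL [F B]]].
      destruct Ha as [[x [y E]]|[[x [y E]]|[E|[x [y E]]]]]; subst.
      * apply FS_sound; auto.
      * apply DP_sound; auto.
      * apply N_sound; auto.
      * apply GD_sound; auto.
    + destruct FC as [I [F Dn]].
      destruct Ha as [[x [y E]]|[E|[x [y E]]]]; subst.
      * apply DP_sound; auto.
      * apply N_sound; auto.
      * apply CD_sound; auto.
Qed.

Section CS4C.
Variable Ax : form -> Prop.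
Notation pv := (prv Ax).
Notation ded := (ded Ax).
Notation theory := (theory Ax).

Record cw := { cG : form -> Prop; cS : form -> Prop;
  cG_th : theory cG; cG_pr : prime cG;
  cS_or : forall a b, cS a -> cS b -> cS (Or a b);
  cS_ok : forall s, cS s -> ~ cG (Dia s) }.

Definition cle (w v : cw) := forall x, cG w x -> cG v x.
Definition csq (w v : cw) := (forall x, cG w (Box x) -> cG v x) /\ (forall x, cS w x -> cS v x).

Lemma cle_refl w : cle w w. Proof. intros x; auto. Qed.
Lemma cle_trans u v w : cle u v -> cle v w -> cle u w. Proof. intros H1 H2 x; auto. Qed.
Lemma csq_refl w : csq w w.
Proof. split; auto. intros x H; eapply th_pmp; [apply cG_th | apply ax_Tbox | exact H]. Qed.
Lemma csq_trans u v w : csq u v -> csq v w -> csq u w.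
Proof.
  intros [H1 H2] [H3 H4]; split; auto. intros x H; apply H3, H1.
  eapply th_pmp; [apply cG_th | apply ax_4box | exact H].
Qed.
Lemma cbot_le w v : cG w Bot -> cle w v -> cG v Bot. Proof. intros H1 H2; auto. Qed.
Lemma cbot_sq w v : cG w Bot -> csq w v -> cG v Bot.
Proof. intros H1 [H2 _]; apply H2; eapply th_pmp; [apply cG_th | apply ax_efq | exact H1]. Qed.

Definition cF : frame := {| W := cw; Wbot := fun w => cG w Bot; le := cle; sq := csq;
  le_refl := cle_refl; le_trans := cle_trans; sq_refl := csq_refl; sq_trans := csq_trans;
  Wbot_up_le := cbot_le; Wbot_up_sq := cbot_sq |}.

Lemma cval_up p (w v : cw) : cG w (Var p) -> cle w v -> cG v (Var p). Proof. auto. Qed.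
Lemma cval_bot p (w : cw) : cG w Bot -> cG w (Var p).
Proof. intro H; eapply th_pmp; [apply cG_th | apply ax_efq | exact H]. Qed.

Definition cM : model := {| mframe := cF; val := fun p (w : W cF) => cG w (Var p);
  val_up := cval_up; val_bot := cval_bot |}.

Definition mk0 (G : form -> Prop) (T : theory G) (Pr : prime G) : cw.
Proof.
  refine {| cG := G; cS := fun _ => False; cG_th := T; cG_pr := Pr |}; auto.
Defined.

Lemma in_and (w : cw) a b : cG w (And a b) <-> cG w a /\ cG w b.
Proof.
  split.
  - intro H; split; (eapply th_pmp; [apply cG_th | | exact H]); [apply ax_andE1 | apply ax_andE2].
  - intros [H1 H2]; apply (th_and Ax); auto; apply cG_th.
Qed.
Lemma in_or (w : cw) a b : cG w (Or a b) <-> cG w a \/ cG w b.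
Proof.
  split.
  - apply cG_pr.
  - intros [H|H]; (eapply th_pmp; [apply cG_th | | exact H]); [apply ax_orI1 | apply ax_orI2].
Qed.

Lemma dia_wit (u : cw) a : cG u (Dia a) -> exists v : cw, csq u v /\ cG v a.
Proof.
  intro Hd.
  set (X := fun x => BoxInv (cG u) x \/ x = a).
  destruct (lindenbaum Ax X (fun p => exists s, cS u s /\ ded X (Imp p (Dia s)))) as [D [T [Pr [Sub Av]]]].
  - intros p q [s1 [H1 D1]] [s2 [H2 D2]]. exists (Or s1 s2); split; [apply cS_or; auto|].
    apply (ded_orE Ax); (eapply (ded_comp Ax); [eassumption|]); apply (d_thm Ax), pv_dia_mono; [apply ax_orI1|apply ax_orI2].
  - intros p [s [Hs Ds]] Dp. apply (cS_ok u s Hs).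
    assert (E : ded X (Dia s)) by (eapply (d_mp Ax); eauto).
    apply (deduction Ax) in E. apply (box_ded Ax) in E; [|apply cG_th].
    assert (E2 : cG u (Imp (Dia a) (Dia (Dia s))))
      by (eapply th_mp; [apply cG_th | apply (th_thm Ax); [apply cG_th|apply ax_Kdia] | exact E]).
    eapply th_pmp; [apply cG_th | apply ax_4dia |].
    eapply th_mp; [apply cG_th | exact E2 | exact Hd].
  - assert (ok : forall s, cS u s -> ~ D (Dia s)).
    { intros s Hs HD; apply (Av (Dia s)); auto. exists s; split; auto; apply (ded_idi Ax). }
    exists {| cG := D; cS := cS u; cG_th := T; cG_pr := Pr; cS_or := cS_or u; cS_ok := ok |}.
    split; [split|]; simpl; auto.
    + intros x Hx; apply Sub; left; exact Hx.
    + apply Sub; right; auto.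
Qed.

Lemma truth f : forall w : cw, sat cM w f <-> cG w f.
Proof.
  induction f; intro w; simpl.
  - tauto.
  - tauto.
  - rewrite in_and, IHf1, IHf2; tauto.
  - rewrite in_or, IHf1, IHf2; tauto.
  - split.
    + intro H. apply NNPP; intro Hn.
      destruct (lind1 Ax (fun x => cG w x \/ x = f1) f2) as [G [T [Pr [Sub Hb]]]].
      { intro D; apply Hn, cG_th, (deduction Ax), D. }
      set (u := mk0 G T Pr).
      assert (Hu : cle w u) by (intros x Hx; apply Sub; left; auto).
      apply Hb. apply (IHf2 u). apply (H u Hu). apply IHf1. apply Sub; right; auto.
    + intros H v Hv Ha. apply IHf2. apply IHf1 in Ha.
      eapply th_mp; [apply cG_th | apply Hv, H | exact Ha].
  - split.
    + intro H. apply NNPP; intro Hn.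
      assert (ok : forall s, pv (Imp s f) -> ~ cG w (Dia s)).
      { intros s Hs Hd; apply Hn. eapply th_pmp; [apply cG_th | apply pv_dia_mono; exact Hs | exact Hd]. }
      set (u := {| cG := cG w; cS := fun x => pv (Imp x f); cG_th := cG_th w; cG_pr := cG_pr w;
                   cS_or := fun a b H1 H2 => r_mp _ _ _ (r_mp _ _ _ (ax_orE _ _ _ _) H1) H2;
                   cS_ok := ok |}).
      destruct (H u (cle_refl w)) as [v [[Hv1 Hv2] Hva]].
      apply IHf in Hva.
      apply (cS_ok v f); [apply Hv2; simpl; apply pv_id |].
      eapply th_pmp; [apply cG_th | apply ax_Tdia | exact Hva].
    + intros H u Hu. destruct (dia_wit u f (Hu _ H)) as [v [H1 H2]].
      exists v; split; auto; apply IHf; auto.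
  - split.
    + intro H. apply NNPP; intro Hn.
      destruct (lind1 Ax (BoxInv (cG w)) f) as [G [T [Pr [Sub Hb]]]].
      { intro D; apply Hn, (box_ded Ax); [apply cG_th | exact D]. }
      set (u := mk0 (cG w) (cG_th w) (cG_pr w)).
      set (v := mk0 G T Pr).
      apply Hb. apply (IHf v). apply (H u v (cle_refl w)).
      split; simpl; auto.
    + intros H u v Hu [Hv _]. apply IHf, Hv, Hu, H.
Qed.

Lemma cF_bc : backward_confluent cF.
Proof.
  intros w v v' [H1 _] H2. exists (mk0 (cG w) (cG_th w) (cG_pr w)).
  split; [exact (cle_refl w) | split; simpl; [intros x Hx; apply H2, H1, Hx | contradiction]].
Qed.

Lemma complete_cs4 f : (forall M : model, backward_confluent (mframe M) -> valid M f) -> pv f.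
Proof.
  intro H. apply NNPP; intro Hn.
  destruct (lind1 Ax (fun _ => False) f) as [G [T [Pr [_ Hb]]]].
  { intro D; apply Hn, (ded_empty Ax), D. }
  set (w := mk0 G T Pr).
  assert (Hw : ~ cG w Bot).
  { intro Hbot; apply Hb. eapply th_pmp; [exact T | apply ax_efq | exact Hbot]. }
  apply Hb. apply (truth f w). apply (H cM cF_bc w Hw).
Qed.

End CS4C.

Local Arguments pv_id {Ax}. Local Arguments d_hyp {Ax X}. Local Arguments d_thm {Ax X}.
Local Arguments d_mp {Ax X}. Local Arguments ded_mono {Ax}. Local Arguments ded_pmp {Ax X}.
Local Arguments deduction {Ax X}. Local Arguments ded_weak1 {Ax X}. Local Arguments ded_ass {Ax X}.
Local Arguments ded_empty {Ax}. Local Arguments ded_comp {Ax X}. Local Arguments ded_orE {Ax X}.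
Local Arguments ded_orI1 {Ax X}. Local Arguments ded_orI2 {Ax X}. Local Arguments ded_idi {Ax X}.
Local Arguments ded_K {Ax X}. Local Arguments ded_and {Ax X}. Local Arguments pv_dia_mono {Ax}.
Local Arguments pv_box_mono {Ax}. Local Arguments th_thm {Ax}. Local Arguments th_mp {Ax}.
Local Arguments th_pmp {Ax}. Local Arguments box_ded {Ax}. Local Arguments th_top {Ax}.
Local Arguments th_and {Ax}.

Section Std.
Variable Ax : form -> Prop.
Notation pv := (prv Ax).
Notation ded := (ded Ax).
Notation theory := (theory Ax).
Hypothesis hDP : forall a b, Ax (Imp (Dia (Or a b)) (Or (Dia a) (Dia b))).
Hypothesis hN : Ax (Neg (Dia Bot)).

Lemma noDiaBot G : theory G -> ~ G Bot -> ~ G (Dia Bot).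
Proof. intros T C H; apply C; eapply th_mp; [exact T | eapply th_thm; [exact T | apply ax_extra, hN] | exact H]. Qed.

Lemma dia_or G z1 z2 : theory G -> prime G -> ~ G (Dia z1) -> ~ G (Dia z2) -> ~ G (Dia (Or z1 z2)).
Proof.
  intros T Pr H1 H2 H. apply (th_pmp G _ _ T (ax_extra _ _ (hDP z1 z2))) in H.
  destruct (Pr _ _ H); auto.
Qed.

Lemma L_succ G (Y : form -> Prop) : theory G -> prime G -> ~ G Bot ->
  Y Top -> (forall a b, Y a -> Y b -> Y (And a b)) -> (forall x, Y x -> G (Dia x)) ->
  exists D, theory D /\ prime D /\ ~ D Bot /\ (forall x, Y x -> D x) /\
    (forall x, G (Box x) -> D x) /\ (forall x, D x -> G (Dia x)).
Proof.
  intros T Pr C HT HA HY.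
  set (X := fun u => BoxInv G u \/ exists y, Y y /\ u = (fun x => x) y).
  destruct (lindenbaum Ax X (fun p => exists z, ~ G (Dia z) /\ ded X (Imp p z))) as [D [TD [PD [Sub Av]]]].
  - intros p q [z1 [H1 D1]] [z2 [H2 D2]]. exists (Or z1 z2); split; [apply dia_or; auto|].
    apply ded_orE; (eapply ded_comp; [eassumption|]); [apply ded_orI1 | apply ded_orI2].
  - intros p [z [Hz Dz]] Dp. apply Hz.
    assert (E : ded X z) by (eapply d_mp; eauto).
    destruct (split_lem Ax (BoxInv G) Y (fun x => x) HT HA (fun a b => ax_andE1 _ a b) (fun a b => ax_andE2 _ a b) z E)
      as [y [Hy Ey]].
    apply (box_ded G _ T) in Ey.
    eapply th_mp; [exact T | | apply HY, Hy].
    eapply th_mp; [exact T | eapply th_thm; [exact T | apply ax_Kdia] | exact Ey].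
  - exists D; repeat split; auto.
    + intro HB; apply (Av Bot); auto. exists Bot; split; [apply noDiaBot; auto | apply ded_idi].
    + intros x Hx; apply Sub; right; exists x; auto.
    + intros x Hx; apply Sub; left; exact Hx.
    + intros x Hx; apply NNPP; intro Hn; apply (Av x); auto. exists x; split; auto; apply ded_idi.
Qed.

Lemma box_base G a : theory G -> ~ G (Box a) ->
  exists T, theory T /\ prime T /\ ~ T Bot /\ (forall x, G (Box x) -> T x) /\ ~ T a.
Proof.
  intros TG Hn. destruct (lind1 Ax (BoxInv G) a) as [D [TD [PD [Sub Hb]]]].
  { intro E; apply Hn; eapply box_ded; [exact TG | exact E]. }
  exists D; repeat split; auto.
  intro HB; apply Hb; eapply th_pmp; [exact TD | apply ax_efq | exact HB].
Qed.

Section FS.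
Hypothesis hFS : forall a b, Ax (Imp (Imp (Dia a) (Box b)) (Box (Imp a b))).
Lemma L_back G Th : theory G -> prime G -> ~ G Bot -> theory Th -> prime Th -> ~ Th Bot ->
  (forall x, G (Box x) -> Th x) ->
  exists G', theory G' /\ prime G' /\ ~ G' Bot /\ (forall x, G x -> G' x) /\
    (forall x, G' (Box x) -> Th x) /\ (forall x, Th x -> G' (Dia x)).
Proof.
  intros T Pr C TT PT CT HB.
  set (X := fun u => G u \/ exists y, Th y /\ u = Dia y).
  destruct (lindenbaum Ax X (fun p => exists y, ~ Th y /\ ded X (Imp p (Box y)))) as [D [TD [PD [Sub Av]]]].
  - intros p q [y1 [H1 D1]] [y2 [H2 D2]]. exists (Or y1 y2); split.
    + intro H; destruct (PT _ _ H); auto.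
    + apply ded_orE; (eapply ded_comp; [eassumption|]); apply d_thm, pv_box_mono; [apply ax_orI1 | apply ax_orI2].
  - intros p [y [Hy Dy]] Dp. apply Hy.
    assert (E : ded X (Box y)) by (eapply d_mp; eauto).
    destruct (split_lem Ax G Th Dia (th_top Th TT) (fun a b => th_and Th a b TT)
      (fun a b => pv_dia_mono _ _ (ax_andE1 _ a b)) (fun a b => pv_dia_mono _ _ (ax_andE2 _ a b)) _ E)
      as [x [Hx Ex]].
    apply T in Ex.
    apply (th_pmp G _ _ T (ax_extra _ _ (hFS x y))) in Ex.
    apply HB in Ex. eapply th_mp; [exact TT | exact Ex | exact Hx].
  - exists D; repeat split; auto.
    + intro HD; apply (Av Bot); auto. exists Bot; split; auto. apply d_thm, ax_efq.
    + intros x Hx; apply Sub; left; exact Hx.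
    + intros x Hx; apply NNPP; intro Hn; apply (Av (Box x)); auto. exists x; split; auto; apply ded_idi.
    + intros x Hx; apply Sub; right; exists x; auto.
Qed.
End FS.

Section CD.
Hypothesis hCD : forall a b, Ax (Imp (Box (Or a b)) (Or (Box a) (Dia b))).
Lemma L_down G Th : theory G -> prime G -> ~ G Bot -> theory Th -> prime Th -> ~ Th Bot ->
  (forall x, G (Box x) -> Th x) ->
  exists G', theory G' /\ prime G' /\ ~ G' Bot /\ (forall x, G (Box x) -> G' x) /\
    (forall x, G' x -> G (Dia x)) /\ (forall x, G' x -> Th x).
Proof.
  intros T Pr C TT PT CT HB.
  set (X := BoxInv G).
  destruct (lindenbaum Ax X (fun p => exists y z, ~ Th y /\ ~ G (Dia z) /\ ded X (Imp p (Or y z))))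
    as [D [TD [PD [Sub Av]]]].
  - intros p q [y1 [z1 [H1 [H2 D1]]]] [y2 [z2 [H3 [H4 D2]]]]. exists (Or y1 y2), (Or z1 z2); split; [|split].
    + intro H; destruct (PT _ _ H); auto.
    + apply dia_or; auto.
    + apply ded_orE; (eapply ded_comp; [eassumption|]); apply ded_orE.
      * eapply ded_comp; [apply ded_orI1 | apply ded_orI1].
      * eapply ded_comp; [apply ded_orI1 | apply ded_orI2].
      * eapply ded_comp; [apply ded_orI2 | apply ded_orI1].
      * eapply ded_comp; [apply ded_orI2 | apply ded_orI2].
  - intros p [y [z [Hy [Hz Dy]]]] Dp.
    assert (E : ded X (Or y z)) by (eapply d_mp; eauto).
    apply (box_ded G _ T) in E.
    apply (th_pmp G _ _ T (ax_extra _ _ (hCD y z))) in E.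
    destruct (Pr _ _ E); auto.
  - exists D; refine (conj TD (conj PD (conj _ (conj _ (conj _ _))))).
    + intro HD; apply (Av Bot); auto. exists Bot, Bot; repeat split; auto.
      apply noDiaBot; auto. apply ded_orI1.
    + intros x Hx; apply Sub; exact Hx.
    + intros x Hx; apply NNPP; intro Hn; apply (Av x); auto. exists Bot, x; repeat split; auto.
      apply ded_orI2.
    + intros x Hx; apply NNPP; intro Hn; apply (Av x); auto. exists x, Bot; repeat split; auto.
      apply noDiaBot; auto. apply ded_orI1.
Qed.
End CD.

Record sw := { sG : form -> Prop; s_th : theory sG; s_pr : prime sG; s_co : ~ sG Bot }.
Definition sle (w v : sw) := forall x, sG w x -> sG v x.
Definition ssq (w v : sw) := (forall x, sG w (Box x) -> sG v x) /\ (forall x, sG v x -> sG w (Dia x)).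

Lemma sle_refl w : sle w w. Proof. intros x; auto. Qed.
Lemma sle_trans u v w : sle u v -> sle v w -> sle u w. Proof. intros H1 H2 x; auto. Qed.
Lemma ssq_refl w : ssq w w.
Proof.
  split; intros x H; (eapply th_pmp; [apply s_th | | exact H]); [apply ax_Tbox | apply ax_Tdia].
Qed.
Lemma ssq_trans u v w : ssq u v -> ssq v w -> ssq u w.
Proof.
  intros [H1 H2] [H3 H4]; split.
  - intros x H; apply H3, H1. eapply th_pmp; [apply s_th | apply ax_4box | exact H].
  - intros x H. eapply th_pmp; [apply s_th | apply ax_4dia | apply H2, H4, H].
Qed.

Definition sF : frame := {| W := sw; Wbot := fun _ => False; le := sle; sq := ssq;
  le_refl := sle_refl; le_trans := sle_trans; sq_refl := ssq_refl; sq_trans := ssq_trans;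
  Wbot_up_le := fun _ _ H _ => H; Wbot_up_sq := fun _ _ H _ => H |}.

Lemma sval_up p (w v : sw) : sG w (Var p) -> sle w v -> sG v (Var p). Proof. auto. Qed.

Definition sM : model := {| mframe := sF; val := fun p (w : W sF) => sG w (Var p);
  val_up := sval_up; val_bot := fun p w (H : False) => match H with end |}.

Lemma s_and (w : sw) a b : sG w (And a b) <-> sG w a /\ sG w b.
Proof.
  split.
  - intro H; split; (eapply th_pmp; [apply s_th | | exact H]); [apply ax_andE1 | apply ax_andE2].
  - intros [H1 H2]; apply (th_and (Ax:=Ax)); auto; apply s_th.
Qed.
Lemma s_or (w : sw) a b : sG w (Or a b) <-> sG w a \/ sG w b.
Proof.
  split.
  - apply s_pr.
  - intros [H|H]; (eapply th_pmp; [apply s_th | | exact H]); [apply ax_orI1 | apply ax_orI2].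
Qed.

Lemma pv_and a x y : pv (Imp a x) -> pv (Imp a y) -> pv (Imp a (And x y)).
Proof.
  intros H1 H2; apply ded_empty, deduction, ded_and;
  (eapply d_mp; [apply ded_weak1, d_thm; eassumption | apply ded_ass]).
Qed.

Lemma s_dia_wit (u : sw) a : sG u (Dia a) -> exists v : sw, ssq u v /\ sG v a.
Proof.
  intro H.
  destruct (L_succ (sG u) (fun x => pv (Imp a x)) (s_th u) (s_pr u) (s_co u)) as
    [D [TD [PD [CD [S1 [S2 S3]]]]]].
  - eapply r_mp; [apply ax_K | apply pv_id].
  - intros; apply pv_and; auto.
  - intros x Hx; eapply th_pmp; [apply s_th | apply pv_dia_mono, Hx | exact H].
  - exists {| sG := D; s_th := TD; s_pr := PD; s_co := CD |}; split; [split|]; simpl; auto.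
    apply S1, pv_id.
Qed.

Section Truth.
Hypothesis hBox : forall (w : sw) a, ~ sG w (Box a) ->
  exists u v : sw, sle w u /\ ssq u v /\ ~ sG v a.

Lemma s_truth f : forall w : sw, sat sM w f <-> sG w f.
Proof.
  induction f; intro w; simpl.
  - tauto.
  - split; [contradiction | apply s_co].
  - rewrite s_and, IHf1, IHf2; tauto.
  - rewrite s_or, IHf1, IHf2; tauto.
  - split.
    + intro H. apply NNPP; intro Hn.
      destruct (lind1 Ax (fun x => sG w x \/ x = f1) f2) as [G [T [Pr [Sub Hb]]]].
      { intro D; apply Hn, s_th, deduction, D. }
      assert (CG : ~ G Bot).
      { intro HB; apply Hb; eapply th_pmp; [exact T | apply ax_efq | exact HB]. }
      set (u := {| sG := G; s_th := T; s_pr := Pr; s_co := CG |}).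
      assert (Hu : sle w u) by (intros x Hx; apply Sub; left; auto).
      apply Hb. apply (IHf2 u). apply (H u Hu). apply IHf1. apply Sub; right; auto.
    + intros H v Hv Ha. apply IHf2. apply IHf1 in Ha.
      eapply th_mp; [apply s_th | apply Hv, H | exact Ha].
  - split.
    + intro H. destruct (H w (sle_refl w)) as [v [[_ Hv] Ha]]. apply Hv, IHf, Ha.
    + intros H u Hu. destruct (s_dia_wit u f (Hu _ H)) as [v [H1 H2]].
      exists v; split; auto; apply IHf; auto.
  - split.
    + intro H. apply NNPP; intro Hn.
      destruct (hBox w f Hn) as [u [v [H1 [H2 H3]]]].
      apply H3, IHf, (H u v H1 H2).
    + intros H u v Hu [Hv _]. apply IHf, Hv, Hu, H.
Qed.

Lemma complete_std f (Pfr : frame -> Prop) : Pfr sF ->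
  (forall M : model, Pfr (mframe M) -> valid M f) -> pv f.
Proof.
  intros HP H. apply NNPP; intro Hn.
  destruct (lind1 Ax (fun _ => False) f) as [G [T [Pr [_ Hb]]]].
  { intro D; apply Hn, ded_empty, D. }
  assert (CG : ~ G Bot).
  { intro HB; apply Hb; eapply th_pmp; [exact T | apply ax_efq | exact HB]. }
  set (w := {| sG := G; s_th := T; s_pr := Pr; s_co := CG |}).
  apply Hb. apply (s_truth f w). apply (H sM HP w). simpl; auto.
Qed.
End Truth.

Lemma sF_fc : forward_confluent sF.
Proof.
  intros w w' v H1 [H2 H3].
  destruct (L_succ (sG w') (sG v) (s_th w') (s_pr w') (s_co w')) as
    [D [TD [PD [CD [S1 [S2 S3]]]]]].
  - apply (th_top (Ax:=Ax)), s_th.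
  - intros; apply (th_and (Ax:=Ax)); auto; apply s_th.
  - intros x Hx; apply H1, H3, Hx.
  - exists {| sG := D; s_th := TD; s_pr := PD; s_co := CD |}; split; [|split]; simpl; auto.
Qed.

Lemma sF_inf : infallible sF.
Proof. intros w H; exact H. Qed.

End Std.

Definition AG := extra_axioms GS4.
Definition AS := extra_axioms S4I.

Lemma G_DP a b : AG (Imp (Dia (Or a b)) (Or (Dia a) (Dia b))).
Proof. right; left; exists a, b; auto. Qed.
Lemma G_N : AG (Neg (Dia Bot)).
Proof. right; right; left; reflexivity. Qed.
Lemma G_FS a b : AG (Imp (Imp (Dia a) (Box b)) (Box (Imp a b))).
Proof. left; exists a, b; auto. Qed.
Lemma G_GD a b : AG (Or (Imp a b) (Imp b a)).
Proof. right; right; right; exists a, b; auto. Qed.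
Lemma S_DP a b : AS (Imp (Dia (Or a b)) (Or (Dia a) (Dia b))).
Proof. left; exists a, b; auto. Qed.
Lemma S_N : AS (Neg (Dia Bot)).
Proof. right; left; reflexivity. Qed.
Lemma S_CD a b : AS (Imp (Box (Or a b)) (Or (Box a) (Dia b))).
Proof. right; right; exists a, b; auto. Qed.

Lemma G_hBox : forall (w : sw AG) a, ~ sG AG w (Box a) ->
  exists u v : sw AG, sle AG w u /\ ssq AG u v /\ ~ sG AG v a.
Proof.
  intros w a Hn.
  destruct (box_base AG (sG AG w) a (s_th AG w) Hn) as [Th [TT [PT [CT [HB Ha]]]]].
  destruct (L_back AG G_FS (sG AG w) Th (s_th AG w) (s_pr AG w) (s_co AG w) TT PT CT HB)
    as [G' [T' [P' [C' [S1 [S2 S3]]]]]].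
  exists {| sG := G'; s_th := T'; s_pr := P'; s_co := C' |}, {| sG := Th; s_th := TT; s_pr := PT; s_co := CT |}.
  split; [|split; [split|]]; simpl; auto.
Qed.

Lemma G_frame : GS4_frame (sF AG).
Proof.
  split; [apply sF_inf|split; [|split; [apply sF_fc; [apply G_DP|apply G_N]|]]].
  - intros w u v H1 H2. apply NNPP; intro Hn. apply not_or_and in Hn as [Hn1 Hn2].
    apply not_all_ex_not in Hn1 as [a Ha]. apply imply_to_and in Ha as [Ha1 Ha2].
    apply not_all_ex_not in Hn2 as [b Hb]. apply imply_to_and in Hb as [Hb1 Hb2].
    assert (Hw : sG AG w (Or (Imp a b) (Imp b a))) by (eapply th_thm; [apply s_th | apply ax_extra, G_GD]).
    destruct (s_pr AG w _ _ Hw) as [H|H].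
    + apply Hb2. eapply (th_mp (Ax:=AG)); [apply s_th | apply H1, H | exact Ha1].
    + apply Ha2. eapply (th_mp (Ax:=AG)); [apply s_th | apply H2, H | exact Hb1].
  - intros w v v' [H1 H2] H3.
    destruct (L_back AG G_FS (sG AG w) (sG AG v') (s_th AG w) (s_pr AG w) (s_co AG w)
      (s_th AG v') (s_pr AG v') (s_co AG v')) as [G' [T' [P' [C' [S1 [S2 S3]]]]]].
    { intros x Hx; apply H3, H1, Hx. }
    exists {| sG := G'; s_th := T'; s_pr := P'; s_co := C' |}. split; [|split]; simpl; auto.
Qed.

Lemma S_hBox : forall (w : sw AS) a, ~ sG AS w (Box a) ->
  exists u v : sw AS, sle AS w u /\ ssq AS u v /\ ~ sG AS v a.
Proof.
  intros w a Hn.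
  destruct (box_base AS (sG AS w) a (s_th AS w) Hn) as [Th [TT [PT [CT [HB Ha]]]]].
  destruct (L_down AS S_DP S_N S_CD (sG AS w) Th (s_th AS w) (s_pr AS w) (s_co AS w) TT PT CT HB)
    as [G' [T' [P' [C' [S1 [S2 S3]]]]]].
  exists w, {| sG := G'; s_th := T'; s_pr := P'; s_co := C' |}.
  split; [apply sle_refl|split; [split|]]; simpl; auto.
Qed.

Lemma S_frame : S4I_frame (sF AS).
Proof.
  split; [apply sF_inf|split; [apply sF_fc; [apply S_DP|apply S_N]|]].
  intros w v v' H1 [H2 H3].
  destruct (L_down AS S_DP S_N S_CD (sG AS w) (sG AS v') (s_th AS w) (s_pr AS w) (s_co AS w)
    (s_th AS v') (s_pr AS v') (s_co AS v')) as [G' [T' [P' [C' [S1 [S2 S3]]]]]].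
  { intros x Hx; apply H2, H1, Hx. }
  exists {| sG := G'; s_th := T'; s_pr := P'; s_co := C' |}. split; [split|]; simpl; auto.
Qed.

Theorem mainTheorem4 :
  forall (L : logic) (phi : form),
    proves L phi <->
    (forall M : model, frame_class L (mframe M) -> valid M phi).
Proof.
  intros L phi; split.
  - intros D M FC w _. apply (sound_L L M phi FC D).
  - intro H. destruct L.
    + apply (complete_cs4 (extra_axioms CS4) phi). intros M HM; apply H; exact HM.
    + apply (complete_std AG G_DP G_N G_hBox phi GS4_frame G_frame). exact H.
    + apply (complete_std AS S_DP S_N S_hBox phi S4I_frame S_frame). exact H.
Qed.
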